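(* For a $T_1$-space $X$ the following are equivalent: (1) $X$ is metrizable; (2) $X$ is a perfect space with a regular base at non-isolated points; (3) $X$ is a perfect space with a strong development at non-isolated points.
   Context: $X$ is perfect if every open subset is an $F_\sigma$-set. $I(X)$ is the set of isolated points, $\mathcal{I}(X)=\{\{x\}:x\in I(X)\}$, $\mathrm{st}(A,\mathcal{W})=\bigcup\{W\in\mathcal{W}:W\cap A\neq\emptyset\}$. A base $\mathcal{B}$ is regular at $x$ if for every neighborhood $U$ of $x$ there is an open $V$ with $x\in V\subset U$ such that $\{B\in\mathcal{B}: B\cap V\neq\emptyset,\ B\not\subset U\}$ is finite; a regular base at non-isolated points is regular at every $x\in X\setminus I(X)$. A sequence $\{\mathcal{W}_i\}$ of open covers with $\mathcal{I}(X)\subset\bigcup_i\mathcal{W}_i$ is a strong development at non-isolated points if for every $x\in X\setminus I(X)$ and neighborhood $U$ of $x$ there are a neighborhood $V$ of $x$ and $i$ with $\mathrm{st}(V,\mathcal{W}_i)\subset U$. *)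

(* Defs.v *)
From Stdlib Require Import Reals List.
Open Scope R_scope.

Section Topology.
Variable X : Type.

Definition set := X -> Prop.
Definition subset (A B : set) : Prop := forall x, A x -> B x.

Definition is_topology (T : set -> Prop) : Prop :=
  T (fun _ => True) /\ T (fun _ => False) /\
  (forall U V, T U -> T V -> T (fun x => U x /\ V x)) /\
  (forall F : set -> Prop, (forall U, F U -> T U) ->
     T (fun x => exists U, F U /\ U x)).

Definition T1_space (T : set -> Prop) : Prop :=
  forall x y, x <> y -> exists U, T U /\ U x /\ ~ U y.

Definition closed (T : set -> Prop) (C : set) : Prop := T (fun x => ~ C x).

Definition F_sigma (T : set -> Prop) (A : set) : Prop :=
  exists C : nat -> set, (forall n, closed T (C n)) /\
    (forall x, A x <-> exists n, C n x).

Definition perfect (T : set -> Prop) : Prop :=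
  forall U, T U -> F_sigma T U.

Definition singleton (x : X) : set := fun y => y = x.

Definition isolated (T : set -> Prop) (x : X) : Prop := T (singleton x).

Definition is_base (T : set -> Prop) (B : set -> Prop) : Prop :=
  (forall W, B W -> T W) /\
  (forall U x, T U -> U x -> exists W, B W /\ W x /\ subset W U).

Definition finite_family (F : set -> Prop) : Prop :=
  exists l : list set, forall W, F W -> In W l.

Definition intersects (A B : set) : Prop := exists y, A y /\ B y.

Definition regular_at (T : set -> Prop) (B : set -> Prop) (x : X) : Prop :=
  forall U, T U -> U x ->
    exists V, T V /\ V x /\ subset V U /\
      finite_family (fun W => B W /\ intersects W V /\ ~ subset W U).

Definition regular_base_at_nonisolated (T : set -> Prop) (B : set -> Prop) : Prop :=
  is_base T B /\ forall x, ~ isolated T x -> regular_at T B x.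

Definition star (A : set) (W : set -> Prop) : set :=
  fun y => exists U, W U /\ intersects U A /\ U y.

Definition open_cover (T : set -> Prop) (W : set -> Prop) : Prop :=
  (forall U, W U -> T U) /\ (forall x, exists U, W U /\ U x).

Definition strong_development_at_nonisolated (T : set -> Prop)
    (Ws : nat -> set -> Prop) : Prop :=
  (forall i, open_cover T (Ws i)) /\
  (forall x, isolated T x -> exists i, Ws i (singleton x)) /\
  (forall x, ~ isolated T x -> forall U, T U -> U x ->
     exists V i, T V /\ V x /\ subset (star V (Ws i)) U).

Definition is_metric (d : X -> X -> R) : Prop :=
  (forall x y, d x y = 0 <-> x = y) /\
  (forall x y, d x y = d y x) /\
  (forall x y z, d x z <= d x y + d y z).

Definition metric_open (d : X -> X -> R) (U : set) : Prop :=
  forall x, U x -> exists eps, 0 < eps /\ forall y, d x y < eps -> U y.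

Definition metrizable (T : set -> Prop) : Prop :=
  exists d, is_metric d /\ forall U, T U <-> metric_open d U.

End Topology.

Arguments subset {X}.

(* Main.v *)
Require Import Defs.
From Stdlib Require Import Reals List Lra Lia Classical FunctionalExtensionality PropExtensionality IndefiniteDescription.
Open Scope R_scope.

Lemma choice_ {A B : Type} (P : A -> B -> Prop) :
  (forall a, exists b, P a b) -> exists f : A -> B, forall a, P a (f a).
Proof.
  intros H. exists (fun a => proj1_sig (constructive_indefinite_description _ (H a))).
  intros a. exact (proj2_sig (constructive_indefinite_description _ (H a))).
Qed.

Lemma set_ext {X : Type} (A B : set X) : (forall y, A y <-> B y) -> A = B.
Proof.
  intros H. apply functional_extensionality. intros y. apply propositional_extensionality. apply H.
Qed.

Lemma h_pos n : 0 < (/2)^n.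
Proof. apply pow_lt. lra. Qed.

Lemma h_S n : (/2)^(S n) = (/2)^n / 2.
Proof. simpl. lra. Qed.

Lemma h_small r : 0 < r -> exists n, (/2)^n < r.
Proof.
  intros Hr. destruct (pow_lt_1_zero (/2)) with (y := r) as [N HN]; auto.
  - rewrite Rabs_right; lra.
  - exists N. specialize (HN N (Nat.le_refl N)). rewrite Rabs_right in HN; auto.
    left; apply h_pos.
Qed.

Lemma h_anti n m : (n <= m)%nat -> (/2)^m <= (/2)^n.
Proof.
  intros H. induction H. lra. rewrite h_S. pose proof (h_pos m). lra.
Qed.

Lemma h_lt n m : (/2)^n < (/2)^m -> (m < n)%nat.
Proof.
  intros H. destruct (Nat.lt_ge_cases m n) as [|Hc]; auto.
  apply h_anti in Hc. lra.
Qed.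

Section Topo.
Variable X : Type.
Variable T : set X -> Prop.
Hypothesis HT : is_topology X T.

Lemma T_ext (A B : set X) : T A -> (forall y, A y <-> B y) -> T B.
Proof. intros HA H. rewrite <- (set_ext A B H). auto. Qed.

Lemma T_full : T (fun _ => True).
Proof. destruct HT as [H _]. auto. Qed.

Lemma T_inter U V : T U -> T V -> T (fun x => U x /\ V x).
Proof. destruct HT as [_ [_ [H _]]]. auto. Qed.

Lemma T_local (U : set X) : (forall x, U x -> exists W, T W /\ W x /\ subset W U) -> T U.
Proof.
  intros H. destruct HT as [_ [_ [_ Hu]]].
  apply T_ext with (A := fun x => exists W, (T W /\ subset W U) /\ W x).
  - apply Hu. intros W [HW _]. auto.
  - intros y. split.
    + intros [W [[_ HW] Wy]]. auto.
    + intros Uy. destruct (H y Uy) as [W [HW [Wy HWU]]]. exists W. auto.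
Qed.

Lemma T_finter (K : nat) (A : nat -> set X) :
  (forall j, (j <= K)%nat -> T (A j)) -> T (fun y => forall j, (j <= K)%nat -> A j y).
Proof.
  induction K; intros H.
  - apply T_ext with (A 0%nat). apply H; lia.
    intros y; split. intros Hy j Hj. replace j with 0%nat by lia. auto. intros Hy; apply Hy; lia.
  - apply T_ext with (fun y => (forall j, (j <= K)%nat -> A j y) /\ A (S K) y).
    + apply T_inter. apply IHK. intros; apply H; lia. apply H; lia.
    + intros y; split.
      * intros [H1 H2] j Hj. destruct (Nat.eq_dec j (S K)). subst; auto. apply H1; lia.
      * intros Hy. split. intros; apply Hy; lia. apply Hy; lia.
Qed.

End Topo.

Section Chain.
Variable X : Type.
Variable E : nat -> X -> X -> Prop.
Hypothesis E0 : forall x y, E 0 x y.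
Hypothesis Erefl : forall n x, E n x x.
Hypothesis Esym : forall n x y, E n x y -> E n y x.
Hypothesis Emono : forall n x y, E (S n) x y -> E n x y.
Hypothesis Etri : forall n x y z w, E (S n) x y -> E (S n) y z -> E (S n) z w -> E n x w.

Lemma Emono_le n m x y : (n <= m)%nat -> E m x y -> E n x y.
Proof. intros H. induction H; auto. Qed.

Fixpoint valid (x : X) (l : list (nat * X)) (y : X) : Prop :=
  match l with
  | nil => x = y
  | (n, z) :: l' => E n x z /\ valid z l' y
  end.

Fixpoint cost (l : list (nat * X)) : R :=
  match l with
  | nil => 0
  | (n, _) :: l' => (/2)^n + cost l'
  end.

Lemma cost_nonneg l : 0 <= cost l.
Proof. induction l as [|[n z] l IH]; simpl. lra. pose proof (h_pos n). lra. Qed.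

Lemma cost_app l1 l2 : cost (l1 ++ l2) = cost l1 + cost l2.
Proof. induction l1 as [|[n z] l IH]; simpl. lra. rewrite IH. lra. Qed.

Lemma valid_app x l1 y l2 z : valid x l1 y -> valid y l2 z -> valid x (l1 ++ l2) z.
Proof.
  revert x; induction l1 as [|[n w] l IH]; simpl; intros x H1 H2.
  subst; auto. destruct H1; split; eauto.
Qed.

Lemma valid_split x l1 n z l2 y : valid x (l1 ++ (n, z) :: l2) y ->
  exists w, valid x l1 w /\ E n w z /\ valid z l2 y.
Proof.
  revert x; induction l1 as [|[k v] l IH]; simpl; intros x H.
  - exists x. tauto.
  - destruct H as [H1 H2]. destruct (IH _ H2) as [w [A [B C]]]. exists w. auto.
Qed.

Fixpoint rev_chain (x : X) (l : list (nat * X)) : list (nat * X) :=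
  match l with
  | nil => nil
  | (n, z) :: l' => rev_chain z l' ++ (n, x) :: nil
  end.

Lemma rev_valid x l y : valid x l y -> valid y (rev_chain x l) x.
Proof.
  revert x; induction l as [|[n z] l IH]; simpl; intros x H.
  - auto.
  - destruct H as [H1 H2]. apply valid_app with z; auto. simpl. auto.
Qed.

Lemma rev_cost x l : cost (rev_chain x l) = cost l.
Proof.
  revert x; induction l as [|[n z] l IH]; simpl; intros x. auto.
  rewrite cost_app, IH. simpl. lra.
Qed.

Lemma split_list l p h : p <= h -> h < p + cost l ->
  exists l1 n z l2, l = l1 ++ (n, z) :: l2 /\ p + cost l1 <= h /\ h < p + cost l1 + (/2)^n.
Proof.
  revert p; induction l as [|[n z] l IH]; simpl; intros p H1 H2.
  - lra.
  - destruct (Rlt_or_le h (p + (/2)^n)).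
    + exists nil, n, z, l. simpl. split; auto. lra.
    + destruct (IH (p + (/2)^n)) as [l1 [k [w [l2 [Heq [A B]]]]]]; try lra.
      exists ((n, z) :: l1), k, w, l2. simpl. rewrite Heq. split; auto. lra.
Qed.

Lemma chain_lemma N : forall l x y, (length l <= N)%nat -> valid x l y ->
  forall m, cost l < (/2)^m -> E m x y.
Proof.
  induction N; intros l x y Hlen Hv m Hc.
  - destruct l; simpl in Hlen; try lia. simpl in Hv. subst. auto.
  - destruct l as [|[n0 z0] l0].
    + simpl in Hv; subst; auto.
    + set (S0 := cost ((n0, z0) :: l0)) in *.
      assert (HS : 0 < S0). { unfold S0; simpl. pose proof (h_pos n0). pose proof (cost_nonneg l0). lra. }
      destruct (split_list ((n0, z0) :: l0) 0 (S0 / 2)) as [l1 [n [z [l2 [Heq [A B]]]]]]; try (fold S0; lra).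
      assert (Hc2 : S0 = cost l1 + (/2)^n + cost l2).
      { unfold S0. rewrite Heq, cost_app. simpl. lra. }
      rewrite Heq in Hv. apply valid_split in Hv. destruct Hv as [w [V1 [Ew V2]]].
      assert (Hl : length ((n0, z0) :: l0) = (length l1 + S (length l2))%nat).
      { rewrite Heq, length_app. simpl. lia. }
      assert (Hm : (/2)^(S m) = (/2)^m / 2) by apply h_S.
      apply Etri with w z.
      * apply IHN with l1; [lia | auto |]. rewrite Hm. lra.
      * apply Emono_le with n; auto. apply h_lt. pose proof (cost_nonneg l1). pose proof (cost_nonneg l2). lra.
      * apply IHN with l2; [lia | auto |]. rewrite Hm. lra.
Qed.

Definition CS (x y : X) : R -> Prop := fun r => exists l, valid x l y /\ r = - cost l.

Lemma CS_bound x y : bound (CS x y).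
Proof. exists 0. intros r [l [_ ->]]. pose proof (cost_nonneg l). lra. Qed.

Lemma CS_ne x y : exists r, CS x y r.
Proof. exists (- cost ((0%nat, y) :: nil)). exists ((0%nat, y) :: nil). simpl. auto. Qed.

Definition dch (x y : X) : R := - proj1_sig (completeness (CS x y) (CS_bound x y) (CS_ne x y)).

Lemma dch_le x y l : valid x l y -> dch x y <= cost l.
Proof.
  intros H. unfold dch. destruct (completeness (CS x y) (CS_bound x y) (CS_ne x y)) as [m Hm]. destruct Hm as [Hub Hlub0].
  simpl. assert (- cost l <= m) by (apply Hub; exists l; auto). lra.
Qed.

Lemma dch_approx x y eps : 0 < eps -> exists l, valid x l y /\ cost l < dch x y + eps.
Proof.
  intros He. unfold dch. destruct (completeness (CS x y) (CS_bound x y) (CS_ne x y)) as [m [Hub Hlub]].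
  simpl. destruct (classic (exists l, valid x l y /\ cost l < - m + eps)) as [H|H]; auto.
  exfalso. assert (m <= m - eps); [|lra].
  apply Hlub. intros r [l [Hl ->]].
  destruct (Rle_or_lt (- cost l) (m - eps)); auto. exfalso. apply H. exists l. split; auto. lra.
Qed.

Lemma dch_nonneg x y : 0 <= dch x y.
Proof.
  apply Rnot_lt_le. intros Hlt. destruct (dch_approx x y (- dch x y)) as [l [_ Hl]]. lra.
  pose proof (cost_nonneg l). lra.
Qed.

Lemma dch_sym_le x y : dch y x <= dch x y.
Proof.
  apply le_epsilon. intros eps He. destruct (dch_approx x y eps He) as [l [Hl Hc]].
  pose proof (dch_le _ _ _ (rev_valid _ _ _ Hl)). rewrite rev_cost in H. lra.
Qed.

Lemma dch_tri x y z : dch x z <= dch x y + dch y z.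
Proof.
  apply le_epsilon. intros eps He.
  destruct (dch_approx x y (eps/2)) as [l1 [H1 C1]]; try lra.
  destruct (dch_approx y z (eps/2)) as [l2 [H2 C2]]; try lra.
  pose proof (dch_le _ _ _ (valid_app _ _ _ _ _ H1 H2)). rewrite cost_app in H. lra.
Qed.

Lemma dch_E n x y : E n x y -> dch x y <= (/2)^n.
Proof.
  intros H. pose proof (dch_le x y ((n, y) :: nil)). simpl in H0. assert ((/2)^n + 0 = (/2)^n) by lra.
  rewrite H1 in H0. apply H0. auto.
Qed.

Lemma E_dch n x y : dch x y < (/2)^n -> E n x y.
Proof.
  intros H. destruct (dch_approx x y ((/2)^n - dch x y)) as [l [Hl Hc]]; try lra.
  apply chain_lemma with (length l) l; auto. lra.
Qed.

Hypothesis Esep : forall x y, (forall n, E n x y) -> x = y.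

Lemma dch_metric : is_metric X dch.
Proof.
  split; [|split].
  - intros x y; split.
    + intros H. apply Esep. intros n. apply E_dch. rewrite H. apply h_pos.
    + intros ->. pose proof (dch_le y y nil eq_refl). simpl in H. pose proof (dch_nonneg y y). lra.
  - intros x y. pose proof (dch_sym_le x y). pose proof (dch_sym_le y x). lra.
  - apply dch_tri.
Qed.

End Chain.

Section Metrize.
Variable X : Type.
Variable T : set X -> Prop.
Hypothesis HT : is_topology X T.
Hypothesis HT1 : T1_space X T.
Variable E : nat -> X -> X -> Prop.
Hypothesis E0 : forall x y, E 0 x y.
Hypothesis Erefl : forall n x, E n x x.
Hypothesis Esym : forall n x y, E n x y -> E n y x.
Hypothesis Emono : forall n x y, E (S n) x y -> E n x y.
Hypothesis Etri : forall n x y z w, E (S n) x y -> E (S n) y z -> E (S n) z w -> E n x w.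
Hypothesis Edev : forall x U, T U -> U x -> exists n, forall y, E n x y -> U y.
Hypothesis Eopen : forall n x, exists W, T W /\ W x /\ forall y, W y -> E n x y.

Lemma metrize : metrizable X T.
Proof.
  assert (Esep : forall x y, (forall n, E n x y) -> x = y).
  { intros x y H. apply NNPP. intros Hne. destruct (HT1 x y Hne) as [U [HU [Ux Uy]]].
    destruct (Edev x U HU Ux) as [n Hn]. apply Uy, Hn, H. }
  exists (dch X E E0). split. apply dch_metric; auto.
  intros U; split.
  - intros HU x Ux. destruct (Edev x U HU Ux) as [n Hn]. exists ((/2)^n). split. apply h_pos.
    intros y Hy. apply Hn. apply E_dch with E0; auto.
  - intros HU. apply T_local; auto. intros x Ux. destruct (HU x Ux) as [eps [He Hy]].
    destruct (h_small eps He) as [n Hn]. destruct (Eopen n x) as [W [HW [Wx HWy]]].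
    exists W. split; auto. split; auto. intros y Wy. apply Hy.
    pose proof (dch_E X E E0 n x y (HWy y Wy)). lra.
Qed.

End Metrize.

Section SD.
Variable X : Type.
Variable T : set X -> Prop.
Hypothesis HT : is_topology X T.
Hypothesis HT1 : T1_space X T.
Variable Ws : nat -> set X -> Prop.
Hypothesis HG : forall i, open_cover X T (Ws i).
Variable Wf : nat -> X -> set X.
Hypothesis HWf : forall j x, Ws j (Wf j x) /\ Wf j x x.
Variable sV : X -> set X -> set X.
Variable sI : X -> set X -> nat.
Hypothesis HsV : forall x U, ~ isolated X T x -> T U -> U x ->
  T (sV x U) /\ sV x U x /\ subset (star X (sV x U) (Ws (sI x U))) U.
Variable C : nat -> set X.
Hypothesis HC : forall n, closed X T (C n).
Hypothesis HCI : forall y, isolated X T y <-> exists n, C n y.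
Hypothesis Hsd : forall x, ~ isolated X T x -> forall U, T U -> U x ->
     exists V i, T V /\ V x /\ subset (star X V (Ws i)) U.

Fixpoint M (n : nat) (x : X) : set X :=
  match n with
  | 0 => fun _ => True
  | S n => fun y => (isolated X T x /\ y = x) \/
     (~ isolated X T x /\ sV x (M n x) y /\ M n x y /\
      (forall j, (j <= max n (sI x (M n x)))%nat -> Wf j x y) /\
      (forall k, (k <= S n)%nat -> ~ C k y))
  end.

Lemma M_open n x : T (M n x) /\ M n x x.
Proof.
  revert x; induction n; intros x; simpl.
  - split; auto. apply T_full; auto.
  - destruct (IHn x) as [Ho Hx].
    destruct (classic (isolated X T x)) as [Hi|Hi].
    + split; auto. apply T_ext with (singleton X x); auto.
      intros y; unfold singleton; tauto.
    + destruct (HsV x (M n x) Hi Ho Hx) as [V1 [V2 V3]].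
      split.
      * apply T_ext with (fun y => sV x (M n x) y /\ (M n x y /\
          ((forall j, (j <= max n (sI x (M n x)))%nat -> Wf j x y) /\
           (forall k, (k <= S n)%nat -> ~ C k y)))); auto.
        -- apply T_inter; auto. apply T_inter; auto. apply T_inter; auto.
           ++ apply T_finter; auto. intros j _. destruct (HG j) as [HG1 _]. apply HG1, HWf.
           ++ apply T_finter with (A := fun k y => ~ C k y); auto. intros k _. apply HC.
        -- intros y; tauto.
      * right. split; auto. split; auto. split; auto. split.
        intros j _; apply HWf. intros k _ Hk. apply Hi, HCI. eauto.
Qed.

Lemma M_mono n x y : M (S n) x y -> M n x y.
Proof.
  simpl. intros [[Hi ->]|[_ [_ [H _]]]]; auto. apply M_open.
Qed.

Lemma M_star n a b y0 : M (S n) a y0 -> M (S n) b y0 ->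
  exists c, subset (M (S n) a) (M n c) /\ subset (M (S n) b) (M n c).
Proof.
  intros Ha Hb.
  destruct (classic (isolated X T a)) as [Ia|Ia].
  { exists b. split; [|intros y; apply M_mono].
    intros y Hy. simpl in Ha, Hy. destruct Ha as [[_ ->]|[Na _]]; [|contradiction].
    destruct Hy as [[_ ->]|[Na _]]; [|contradiction]. apply M_mono; auto. }
  destruct (classic (isolated X T b)) as [Ib|Ib].
  { exists a. split; [intros y; apply M_mono|].
    intros y Hy. simpl in Hb, Hy. destruct Hb as [[_ ->]|[Nb _]]; [|contradiction].
    destruct Hy as [[_ ->]|[Nb _]]; [|contradiction]. apply M_mono; auto. }
  assert (G : forall a b, ~ isolated X T a -> ~ isolated X T b -> M (S n) a y0 -> M (S n) b y0 ->
     (sI a (M n a) <= sI b (M n b))%nat ->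
     subset (M (S n) a) (M n a) /\ subset (M (S n) b) (M n a)).
  { clear a b Ia Ib Ha Hb. intros a b Ia Ib Ha Hb Hle. split; [intros y; apply M_mono|].
    destruct (M_open n a) as [Ho Hx].
    destruct (HsV a (M n a) Ia Ho Hx) as [_ [_ Hst]].
    intros y Hy. apply Hst. exists (Wf (sI a (M n a)) b). split. apply HWf.
    simpl in Ha, Hb, Hy.
    destruct Ha as [[Ia' _]|[_ [Va [_ _]]]]; [contradiction|].
    destruct Hb as [[Ib' _]|[_ [_ [_ [Wb _]]]]]; [contradiction|].
    destruct Hy as [[Ib' _]|[_ [_ [_ [Wy _]]]]]; [contradiction|].
    split. exists y0. split; auto. apply Wb. lia. apply Wy. lia. }
  destruct (Nat.le_ge_cases (sI a (M n a)) (sI b (M n b))) as [Hle|Hle].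
  - exists a. apply (G a b); auto.
  - exists b. destruct (G b a) as [G1 G2]; auto.
Qed.

Definition E' (k : nat) (x y : X) : Prop := exists z, M k z x /\ M k z y.

Lemma E'_mono k x y : E' (S k) x y -> E' k x y.
Proof. intros [z [A B]]. exists z. split; apply M_mono; auto. Qed.

Lemma E'_mono_le k m x y : (k <= m)%nat -> E' m x y -> E' k x y.
Proof. intros H. induction H; auto. intros; apply IHle, E'_mono; auto. Qed.

Lemma E'_comp k x y w : E' (S k) x y -> E' (S k) y w -> E' k x w.
Proof.
  intros [a [A1 A2]] [b [B1 B2]]. destruct (M_star k a b y A2 B1) as [c [H1 H2]].
  exists c. auto.
Qed.

Lemma E'_dev x U : T U -> U x -> exists k, forall y, E' k x y -> U y.
Proof.
  intros HU Ux. destruct (classic (isolated X T x)) as [Ix|Nx].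
  - destruct (proj1 (HCI x) Ix) as [k Ck]. exists (S k). intros y [z [Hzx Hzy]].
    simpl in Hzx, Hzy. destruct Hzx as [[_ ->]|[_ [_ [_ [_ Hc]]]]].
    + destruct Hzy as [[_ ->]|[Nz _]]; auto. contradiction.
    + exfalso. apply (Hc k); auto.
  - destruct (Hsd x Nx U HU Ux) as [V [i [HV [Vx Hst]]]]. exists (S i). intros y [z [Hzx Hzy]].
    simpl in Hzx, Hzy. destruct Hzx as [[Iz ->]|[Nz [_ [_ [Wx _]]]]]. contradiction.
    destruct Hzy as [[Iz _]|[_ [_ [_ [Wy _]]]]]. contradiction.
    apply Hst. exists (Wf i z). split. apply HWf. split. exists x. split; auto. apply Wx; lia.
    apply Wy; lia.
Qed.

Lemma SD_metrizable : metrizable X T.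
Proof.
  apply metrize with (E := fun n => E' (2 * n)); auto.
  - intros x y. exists x. simpl. auto.
  - intros n x. exists x. split; apply M_open.
  - intros n x y [z [A B]]. exists z. auto.
  - intros n x y H. apply E'_mono_le with (2 * S n)%nat; auto. lia.
  - intros n x y z w H1 H2 H3. replace (2 * S n)%nat with (S (S (2 * n))) in * by lia.
    apply E'_comp with z. apply E'_comp with y; auto. apply E'_mono; auto.
  - intros x U HU Ux. destruct (E'_dev x U HU Ux) as [k Hk]. exists k. intros y Hy.
    apply Hk. apply E'_mono_le with (2 * k)%nat; auto. lia.
  - intros n x. exists (M (2 * n) x). split. apply M_open. split. apply M_open.
    intros y Hy. exists x. split; auto. apply M_open.
Qed.

End SD.

Lemma sd_to_metrizable (X : Type) (T : set X -> Prop) (HT : is_topology X T) (HT1 : T1_space X T) :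
  perfect X T -> (exists Ws, strong_development_at_nonisolated X T Ws) -> metrizable X T.
Proof.
  intros Hperf [Ws [HG [_ Hsd]]].
  destruct (choice_ (fun (p : nat * X) U => Ws (fst p) U /\ U (snd p))) as [Wf0 HWf0].
  { intros [j x]. destruct (HG j) as [_ H]. apply H. }
  destruct (choice_ (fun (p : X * set X) (q : set X * nat) =>
     ~ isolated X T (fst p) -> T (snd p) -> snd p (fst p) ->
     T (fst q) /\ fst q (fst p) /\ subset (star X (fst q) (Ws (snd q))) (snd p))) as [sf Hsf].
  { intros [x U]. simpl. destruct (classic (~ isolated X T x /\ T U /\ U x)) as [[A [B C]]|Hn].
    - destruct (Hsd x A U B C) as [V [i H]]. exists (V, i). auto.
    - exists ((fun _ => True), 0%nat). intros; exfalso; tauto. }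
  assert (HI : T (isolated X T)).
  { apply T_local; auto. intros x Ix. exists (singleton X x). split; auto. split. reflexivity.
    intros y Hy. unfold singleton in Hy. subst. auto. }
  destruct (Hperf _ HI) as [C [HC HCI]].
  apply SD_metrizable with Ws (fun j x => Wf0 (j, x)) (fun x U => fst (sf (x, U))) (fun x U => snd (sf (x, U))) C; auto; intros; try apply (HWf0 (_, _)); try (apply (Hsf (_, _)); auto).
Qed.

Section RB.
Variable X : Type.
Variable T : set X -> Prop.
Hypothesis HT : is_topology X T.
Hypothesis HT1 : T1_space X T.
Variable B : set X -> Prop.
Hypothesis HB : regular_base_at_nonisolated X T B.

Inductive deep : nat -> set X -> Prop :=
| deep0 W : B W -> deep 0 W
| deepS n W W' : deep n W' -> B W -> subset W W' -> ~ subset W' W -> deep (S n) W.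

Lemma deep_B n W : deep n W -> B W.
Proof. intros H; destruct H; auto. Qed.

Lemma deep_list n W : deep n W -> exists l, length l = S n /\ NoDup l /\
  forall A, In A l -> B A /\ subset W A.
Proof.
  intros H; induction H.
  - exists (W :: nil). simpl. split; auto. split. constructor. auto. constructor.
    intros A [<-|[]]. split; auto. intros y; auto.
  - destruct IHdeep as [l [Hl [Hnd Hall]]]. exists (W :: l). simpl. split; auto. split.
    + constructor; auto. intros Hin. apply H2. apply Hall. auto.
    + intros A [<-|HA]. split; auto. intros y; auto.
      destruct (Hall A HA) as [A1 A2]. split; auto. intros y Hy; auto.
Qed.

Lemma deep_pred n W : deep (S n) W -> deep n W.
Proof.
  revert W; induction n; intros W H; inversion H; subst.
  - constructor; auto.
  - apply deepS with W'; auto.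
Qed.

Lemma deep_le m n W : (m <= n)%nat -> deep n W -> deep m W.
Proof. intros H; induction H; auto. intros; apply IHle, deep_pred; auto. Qed.

Lemma other_point W z : T W -> W z -> ~ isolated X T z -> exists y, W y /\ y <> z.
Proof.
  intros HW Wz Nz. apply NNPP. intros Hn. apply Nz. unfold isolated.
  apply T_ext with W; auto. intros y. unfold singleton. split.
  - intros Wy. apply NNPP. intros Hne. apply Hn. exists y. auto.
  - intros ->; auto.
Qed.

Lemma deep_bound W z : B W -> W z -> ~ isolated X T z -> exists b, ~ deep b W.
Proof.
  intros BW Wz Nz. destruct HB as [[HBT Hbase] Hreg].
  destruct (other_point W z (HBT W BW) Wz Nz) as [y [Wy Hyz]].
  destruct (HT1 z y (not_eq_sym Hyz)) as [U [HU [Uz Uy]]].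
  destruct (Hreg z Nz U HU Uz) as [V [HV [Vz [VU [L HL]]]]].
  exists (length L). intros Hd. apply deep_list in Hd. destruct Hd as [l [Hl [Hnd Hall]]].
  assert (Hinc : incl l L).
  { intros A HA. destruct (Hall A HA) as [BA WA]. apply HL. split; auto. split.
    exists z. auto. intros Hs. apply Uy. apply Hs. auto. }
  pose proof (NoDup_incl_length Hnd Hinc). lia.
Qed.

Lemma deep_exists i z : ~ isolated X T z -> exists W, deep i W /\ W z.
Proof.
  intros Nz. destruct HB as [[HBT Hbase] Hreg]. induction i.
  - destruct (Hbase (fun _ => True) z (T_full X T HT) I) as [W [BW [Wz _]]]. exists W. split; auto. constructor; auto.
  - destruct IHi as [W [Hd Wz]].
    destruct (other_point W z (HBT W (deep_B _ _ Hd)) Wz Nz) as [y [Wy Hyz]].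
    destruct (HT1 z y (not_eq_sym Hyz)) as [O [HO [Oz Oy]]].
    destruct (Hbase (fun x => W x /\ O x) z (T_inter X T HT _ _ (HBT W (deep_B _ _ Hd)) HO) (conj Wz Oz))
      as [W'' [B'' [W''z Hsub]]].
    exists W''. split; auto. apply deepS with W; auto.
    + intros p Hp. apply Hsub; auto.
    + intros Hs. apply Oy. apply Hsub. auto.
Qed.

Definition Gd (i : nat) (A : set X) : Prop :=
  (exists x, isolated X T x /\ A = singleton X x) \/ (deep i A /\ exists z, ~ isolated X T z /\ A z).

Lemma bound_list (F : list (set X)) : exists i, forall A, In A F ->
  (exists z, ~ isolated X T z /\ A z) -> ~ deep i A.
Proof.
  induction F as [|a F IH].
  - exists 0%nat. intros A [].
  - destruct IH as [i0 Hi0].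
    destruct (classic (B a /\ exists z, ~ isolated X T z /\ a z)) as [[Ba [z [Nz az]]]|Hn].
    + destruct (deep_bound a z Ba az Nz) as [b Hb]. exists (max i0 b).
      intros A [<-|HA] Hm Hd.
      * apply Hb. apply deep_le with (max i0 b); auto; lia.
      * apply (Hi0 A HA Hm). apply deep_le with (max i0 b); auto; lia.
    + exists i0. intros A [<-|HA] Hm Hd.
      * apply Hn. split; auto. apply deep_B with i0; auto.
      * apply (Hi0 A HA Hm Hd).
Qed.

Lemma rb_to_sd : exists Ws, strong_development_at_nonisolated X T Ws.
Proof.
  destruct HB as [[HBT Hbase] Hreg] eqn:HBeq.
  exists Gd. split; [|split].
  - intros i. split.
    + intros A [[x [Ix ->]]|[Hd _]]; auto. apply HBT. apply deep_B with i; auto.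
    + intros x. destruct (classic (isolated X T x)) as [Ix|Nx].
      * exists (singleton X x). split. left. exists x. auto. reflexivity.
      * destruct (deep_exists i x Nx) as [W [Hd Wx]]. exists W. split; auto. right. split; eauto.
  - intros x Ix. exists 0%nat. left. exists x. auto.
  - intros x Nx U HU Ux. destruct (Hreg x Nx U HU Ux) as [V [HV [Vx [VU [F HF]]]]].
    destruct (bound_list F) as [i Hi]. exists V, i. split; auto. split; auto.
    intros y [A [HA [Hint Ay]]]. destruct HA as [[x' [Ix' ->]]|[Hd Hm]].
    + destruct Hint as [p [Hp Vp]]. unfold singleton in Hp, Ay. subst. auto.
    + apply NNPP. intros Uy. apply (Hi A); auto. apply HF. refine (conj _ (conj Hint _)). apply deep_B with i; auto.
      intros Hs. apply Uy, Hs, Ay.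
Qed.

End RB.

Section Met.
Variable X : Type.
Variable d : X -> X -> R.
Hypothesis Hd : is_metric X d.

Lemma d_refl x : d x x = 0.
Proof. destruct Hd as [H _]. apply H. auto. Qed.
Lemma d_sym x y : d x y = d y x.
Proof. destruct Hd as [_ [H _]]. auto. Qed.
Lemma d_tri x y z : d x z <= d x y + d y z.
Proof. destruct Hd as [_ [_ H]]. auto. Qed.
Lemma d_nonneg x y : 0 <= d x y.
Proof. pose proof (d_tri x y x). rewrite d_refl, (d_sym y x) in H. lra. Qed.

Lemma ball_open c r : metric_open X d (fun y => d c y < r).
Proof.
  intros x Hx. exists (r - d c x). split. lra. intros y Hy. pose proof (d_tri c x y). lra.
Qed.

Variable T : set X -> Prop.
Hypothesis HTm : forall U, T U <-> metric_open X d U.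

Lemma met_perfect : perfect X T.
Proof.
  intros U HU. apply HTm in HU.
  exists (fun n x => forall y, ~ U y -> (/2)^n <= d x y). split.
  - intros n. apply HTm. intros x Hx. apply not_all_ex_not in Hx. destruct Hx as [y Hy].
    apply imply_to_and in Hy. destruct Hy as [Uy Hy]. apply Rnot_le_lt in Hy.
    exists ((/2)^n - d x y). split. lra. intros z Hz Hc. specialize (Hc y Uy).
    pose proof (d_tri z x y). rewrite (d_sym z x) in H. lra.
  - intros x. split.
    + intros Ux. destruct (HU x Ux) as [eps [He Hb]]. destruct (h_small eps He) as [n Hn].
      exists n. intros y Uy. apply Rnot_lt_le. intros Hc. apply Uy, Hb. lra.
    + intros [n Hn]. apply NNPP. intros Ux. specialize (Hn x Ux). rewrite d_refl in Hn.
      pose proof (h_pos n). lra.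
Qed.

(* Rudin's construction *)
Variable Rw : X -> X -> Prop.
Hypothesis HRa : forall a b, Rw a b -> Rw b a -> a = b.
Hypothesis HRl : forall P : X -> Prop, (exists x, P x) -> exists m, P m /\ forall y, P y -> Rw m y.

Section Eps.
Variable eps : R.
Hypothesis Heps : 0 < eps.

Definition dl (i : nat) : R := eps / 4 * (/2)^i.
Lemma dl_pos i : 0 < dl i.
Proof. unfold dl. pose proof (h_pos i). apply Rmult_lt_0_compat; lra. Qed.
Lemma dl_anti i j : (i <= j)%nat -> dl j <= dl i.
Proof. intros H. unfold dl. apply Rmult_le_compat_l. lra. apply h_anti; auto. Qed.
Lemma dl_half i j : (i < j)%nat -> 2 * dl j <= dl i.
Proof.
  intros H. unfold dl. pose proof (h_anti (S i) j H). rewrite h_S in H0. nra.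
Qed.
Lemma dl_small r : 0 < r -> exists n, dl n < r.
Proof.
  intros Hr. destruct (h_small (r * 4 / eps)) as [n Hn].
  apply Rdiv_lt_0_compat; lra. exists n. unfold dl.
  apply Rmult_lt_compat_l with (r := eps / 4) in Hn; [|lra].
  replace (eps / 4 * (r * 4 / eps)) with r in Hn by (field; lra). lra.
Qed.

Definition least (s z : X) : Prop := d s z < eps /\ forall t, d t z < eps -> Rw s t.
Definition center (Cv : set X) (n : nat) (t z : X) : Prop :=
  least t z /\ (forall w, d z w < 3 * dl n -> d t w < eps) /\ ~ Cv z.
Definition Dl (n : nat) (Cv : set X) (t : X) : set X :=
  fun y => exists z, center Cv n t z /\ d z y < dl n.

Fixpoint cov (n : nat) : set X :=
  match n with
  | 0 => fun _ => False
  | S n => fun y => cov n y \/ exists t, Dl n (cov n) t y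
  end.

Definition D (n : nat) (t : X) : set X := Dl n (cov n) t.

Lemma cov_spec n y : cov n y <-> exists j t, (j < n)%nat /\ D j t y.
Proof.
  induction n; simpl.
  - split. intros []. intros [j [t [H _]]]. lia.
  - rewrite IHn. split.
    + intros [[j [t [H1 H2]]]|[t Ht]]. exists j, t. split; auto; lia. exists n, t. split; auto.
    + intros [j [t [H1 H2]]]. destruct (Nat.eq_dec j n). subst. right. exists t. auto.
      left. exists j, t. split; auto. lia.
Qed.

Lemma D_open n t : metric_open X d (D n t).
Proof.
  intros y [z [Hc Hz]]. exists (dl n - d z y). split. lra.
  intros w Hw. exists z. split; auto. pose proof (d_tri z y w). lra.
Qed.

Lemma D_sub n t y : D n t y -> d t y < eps.
Proof.
  intros [z [[_ [H _]] Hz]]. apply H. pose proof (dl_pos n). lra.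
Qed.

Lemma D_cover x : exists n t, D n t x.
Proof.
  destruct (HRl (fun s => d s x < eps)) as [s [Hs Hmin]]. exists x. rewrite d_refl. auto.
  destruct (dl_small ((eps - d s x) / 3)) as [n Hn]. lra.
  destruct (classic (cov n x)) as [Hc|Hc].
  - apply cov_spec in Hc. destruct Hc as [j [t [_ H]]]. eauto.
  - exists n, s. exists x. split.
    + split. split; auto. split; auto. intros w Hw. pose proof (d_tri s x w). lra.
    + rewrite d_refl. apply dl_pos.
Qed.

Lemma D_sep i s t p q : D i s p -> D i t q -> d p q < dl i -> s = t.
Proof.
  intros [z [[[Hz1 Hz2] [Hz3 _]] Hzp]] [y [[[Hy1 Hy2] [Hy3 _]] Hyq]] Hpq.
  apply NNPP. intros Hne.
  assert (Hzy : 3 * dl i <= d z y).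
  { apply Rnot_lt_le. intros Hlt. apply Hne. apply HRa.
    - apply Hz2. apply Hy3. rewrite d_sym. auto.
    - apply Hy2. apply Hz3. auto. }
  pose proof (d_tri z p y). pose proof (d_tri p q y). rewrite (d_sym q y) in H0.
  lra.
Qed.

Lemma D_locfin x : exists rho, 0 < rho /\ exists l : list (set X),
  forall n t, (exists y, D n t y /\ d x y < rho) -> In (D n t) l.
Proof.
  destruct (D_cover x) as [n [s [z0 [Hc0 Hz0]]]].
  set (g := dl n - d z0 x).
  assert (Hg : 0 < g) by (unfold g; lra).
  assert (Hball : forall w, d x w < g -> cov (S n) w).
  { intros w Hw. simpl. right. exists s. exists z0. split; auto. pose proof (d_tri z0 x w). unfold g in Hw. lra. }
  destruct (dl_small (g / 2)) as [k0 Hk0]. lra.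
  set (k := S (max n k0)).
  assert (Hk : 2 * dl k <= g).
  { assert (k0 <= k)%nat by (unfold k; lia). pose proof (dl_anti k0 k H). lra. }
  exists (dl k). split. apply dl_pos.
  destruct (choice_ (fun i t => (exists t', exists y, D i t' y /\ d x y < dl k) -> exists y, D i t y /\ d x y < dl k)) as [pick Hpick].
  { intros i. destruct (classic (exists t', exists y, D i t' y /\ d x y < dl k)) as [[t' H]|H].
    - exists t'. auto.
    - exists x. intros H'. contradiction. }
  exists (map (fun i => D i (pick i)) (seq 0 k)).
  intros i t [y [Hy Hxy]].
  destruct (Nat.lt_ge_cases i k) as [Hik|Hik].
  - destruct (Hpick i (ex_intro _ t (ex_intro _ y (conj Hy Hxy)))) as [y' [Hy' Hxy']].
    assert (t = pick i).
    { apply D_sep with i y y'; auto. pose proof (d_tri y x y'). rewrite (d_sym y x) in H.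
      pose proof (dl_half i k Hik). lra. }
    subst. change (D i (pick i)) with ((fun j => D j (pick j)) i). apply in_map. apply in_seq. lia.
  - exfalso. destruct Hy as [c [[_ [_ Hnc]] Hcy]]. apply Hnc. apply cov_spec.
    assert (Hxc : d x c < g).
    { pose proof (d_tri x y c). rewrite (d_sym y c) in H. pose proof (dl_anti k i Hik). lra. }
    destruct (proj1 (cov_spec _ _) (Hball c Hxc)) as [j [t' [Hj Ht']]].
    exists j, t'. split; auto. unfold k in Hik; lia.
Qed.

End Eps.

Lemma met_regular : exists B, regular_base_at_nonisolated X T B.
Proof.
  exists (fun W => exists m n t, W = D ((/2)^m) n t).
  assert (Bopen : forall m n t, T (D ((/2)^m) n t)).
  { intros. apply HTm. apply D_open. }
  split; [split|].
  - intros W [m [n [t ->]]]. auto.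
  - intros U x HU Ux. apply HTm in HU. destruct (HU x Ux) as [r [Hr Hb]].
    destruct (h_small (r / 2)) as [m Hm]. lra.
    destruct (D_cover ((/2)^m) (h_pos m) x) as [n [t Ht]].
    exists (D ((/2)^m) n t). split. eauto. split; auto. intros y Hy. apply Hb.
    pose proof (D_sub _ (h_pos m) _ _ _ Ht). pose proof (D_sub _ (h_pos m) _ _ _ Hy). pose proof (d_tri x t y).
    rewrite (d_sym x t) in H1. lra.
  - intros x _ U HU Ux. apply HTm in HU. destruct (HU x Ux) as [r [Hr Hb]].
    destruct (h_small (r / 3)) as [M HM]. lra.
    assert (Hall : forall M, exists rho, 0 < rho /\ exists l : list (set X),
      forall m, (m < M)%nat -> forall n t, (exists y, D ((/2)^m) n t y /\ d x y < rho) -> In (D ((/2)^m) n t) l).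
    { induction M0 as [|M0 IH].
      - exists 1. split. lra. exists nil. intros; lia.
      - destruct IH as [r1 [Hr1 [l1 Hl1]]].
        destruct (D_locfin ((/2)^M0) (h_pos M0) x) as [r2 [Hr2 [l2 Hl2]]].
        exists (Rmin r1 r2). split. apply Rmin_pos; auto. exists (l1 ++ l2).
        intros m Hm n t [y [Hy Hxy]]. apply in_or_app.
        destruct (Nat.eq_dec m M0).
        + subst. right. apply Hl2. exists y. split; auto. pose proof (Rmin_r r1 r2). lra.
        + left. apply (Hl1 m). lia. exists y. split; auto. pose proof (Rmin_l r1 r2). lra. }
    destruct (Hall M) as [rho [Hrho [l Hl]]].
    set (V := fun y => d x y < Rmin rho ((/2)^M)).
    exists V. split. apply HTm. apply ball_open. split. unfold V. rewrite d_refl. apply Rmin_pos; auto. apply h_pos.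
    split.
    + intros y Hy. apply Hb. unfold V in Hy. pose proof (Rmin_r rho ((/2)^M)). lra.
    + exists l. intros W [[m [n [t ->]]] [[p [Wp Vp]] Hns]]. unfold V in Vp.
      destruct (Nat.lt_ge_cases m M) as [HmM|HmM].
      * apply (Hl m); auto. exists p. split; auto. pose proof (Rmin_l rho ((/2)^M)). lra.
      * exfalso. apply Hns. intros y Hy. apply Hb.
        pose proof (D_sub _ (h_pos m) _ _ _ Wp). pose proof (D_sub _ (h_pos m) _ _ _ Hy).
        pose proof (h_anti M m HmM). pose proof (Rmin_r rho ((/2)^M)).
        pose proof (d_tri x p t). pose proof (d_tri x t y). rewrite (d_sym p t) in H3. lra.
Qed.

End Met.

From mathcomp Require ssreflect ssrfun ssrbool eqtype boolp wochoice.
Module WO.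
Import ssreflect ssrfun ssrbool eqtype boolp wochoice.
Lemma wo_exists (X : Type) : exists R : X -> X -> Prop,
  (forall a b, R a b -> R b a -> a = b) /\
  (forall P : X -> Prop, (exists x, P x) -> exists m, P m /\ forall y, P y -> R m y).
Proof.
case: (well_ordering_principle {classic X}) => R HR.
exists (fun a b => R a b); split.
- move=> a b Hab Hba.
  have HC : wo_chain R (@predT {classic X}).
    by move=> A _; apply: HR.
  have := @wo_chain_antisymmetric _ R _ HC a b isT isT.
  by rewrite Hab Hba; apply.
- move=> P [x Px].
  have [z [[Hz Hlb] _]] := HR (fun y => `[< P y >]) (ex_intro _ x (asboolT Px)).
  exists z; split; first by move: Hz => /asboolP.
  by move=> y Py; apply: Hlb; apply/asboolP.
Qed.
End WO.

Theorem mainTheorem8 (X : Type) (T : set X -> Prop)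
  (HT : is_topology X T) (HT1 : T1_space X T) :
  (metrizable X T <->
     (perfect X T /\ exists B, regular_base_at_nonisolated X T B)) /\
  (metrizable X T <->
     (perfect X T /\ exists Ws, strong_development_at_nonisolated X T Ws)).
Proof.
  assert (H12 : metrizable X T -> perfect X T /\ exists B, regular_base_at_nonisolated X T B).
  { intros [d [Hd HTm]]. destruct (WO.wo_exists X) as [Rw [HRa HRl]]. split.
    - apply (met_perfect X d Hd T HTm).
    - apply (met_regular X d Hd T HTm Rw HRa HRl). }
  split; split.
  - exact H12.
  - intros [Hp [B HB]]. apply sd_to_metrizable; auto. apply (rb_to_sd X T HT HT1 B HB).
  - intros Hm. destruct (H12 Hm) as [Hp [B HB]]. split; auto. apply (rb_to_sd X T HT HT1 B HB).
  - intros [Hp Hs]. apply sd_to_metrizable; auto.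
Qed.
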